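(* Let $G=(V,E)$ be a directed graph, $s\neq t$ vertices, $k\ge 1$ an integer and $v\in V$. Then $e(s,v)\in E$ and $EV^*_{k-1}(v,t)$ exists if and only if $e(s,v)$ is an edge of $SPG_k(s,t)$.
   Context: A path from $x$ to $y$ in $G$ is a vertex sequence $x=v_0,\dots,v_m=y$ with $(v_{i-1},v_i)\in E$; its length is $m$ and $V(p)$, $E(p)$ are its vertex and edge sets. A simple path has no repeated vertex. $SPG_k(s,t)$ is the subgraph of $G$ formed by the union of vertex sets and edge sets of all simple paths from $s$ to $t$ of length at most $k$. $EV^*_l(v,t)$ exists iff there is at least one simple path from $v$ to $t$ of length at most $l$ not containing $s$, and then it is the intersection of $V(p)$ over all such paths. *)

(* Defs.v *)
From mathcomp Require Import all_boot.
Set Implicit Arguments. Unset Strict Implicit. Unset Printing Implicit Defensive.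

Section Paths.
Variables (V : finType) (E : rel V).

(* A path from x to y is the vertex sequence x :: p = [v_0; ...; v_m] with
   v_0 = x, v_m = last x p = y and (v_{i-1}, v_i) \in E; its length is
   m = size p. *)
Definition is_path (x y : V) (p : seq V) : bool :=
  path E x p && (last x p == y).

Definition path_vertices (x : V) (p : seq V) : seq V := x :: p.

Definition path_edges (x : V) (p : seq V) : seq (V * V) := zip (x :: p) p.

Definition is_simple_path (x y : V) (p : seq V) : bool :=
  is_path x y p && uniq (path_vertices x p).

Definition in_SPG_edge (k : nat) (s t : V) (a b : V) : Prop :=
  exists p : seq V,
    [/\ is_simple_path s t p, size p <= k & (a, b) \in path_edges s p].

Definition EVstar_exists (s : V) (l : nat) (v t : V) : Prop :=
  exists p : seq V,
    [/\ is_simple_path v t p, size p <= l & s \notin path_vertices v p].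

End Paths.

(* Main.v *)
Require Import Defs.
From mathcomp Require Import all_boot.

Lemma mem_zip_fst (T : eqType) (a b : T) (x y : seq T) :
  (a, b) \in zip x y -> a \in x.
Proof.
elim: x y => [|c x IH] [|d y] //=.
move=> H; rewrite in_cons in H; case/orP: H => [/eqP [-> _]|H]; first by rewrite mem_head.
by rewrite in_cons (IH _ H) orbT.
Qed.

Theorem lemma4p4 (V : finType) (E : rel V) (s t v : V) (k : nat) :
  s != t -> 1 <= k ->
  (E s v /\ EVstar_exists E s k.-1 v t) <-> in_SPG_edge E k s t s v.
Proof.
move=> _ hk; split.
- move=> [Esv [p [/andP [/andP [hp hl] hu] hs hsn]]].
  exists (v :: p); split.
  + rewrite /is_simple_path /is_path /= Esv hp hl /=.
    by rewrite /path_vertices in hsn hu *; move: hu => /= ->; rewrite andbT.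
  + by rewrite /= -(prednK hk) ltnS.
  + by rewrite /path_edges /= mem_head.
- move=> [[|w q] [/andP [/andP [hp hl] hu] hs he]] //.
  rewrite /path_edges /= in_cons in he.
  move: hu; rewrite /path_vertices /= => /andP [hsn hu].
  case/orP: he => [/eqP [->]|he]; last first.
    by move: hsn; rewrite (@mem_zip_fst _ _ _ _ _ he).
  move/andP: hp => [Esw hp].
  split=> //; exists q; split => //.
  + by rewrite /is_simple_path /is_path /path_vertices; rewrite /= hu andbT; apply/andP; split=> //.
  + by move: hs; case: (k) hk.
Qed.
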